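(* Suppose that a connected graph $H$ contains the star $K_{1,4}$ as a subgraph but does not contain any subgraph isomorphic to $S_{4,4}$. Then $H$ contains a vertex of degree more than $(v(H)/2)^{1/7}$.
   Context: Graphs are finite simple graphs; $v(H)$ is the number of vertices of $H$. The sparkler graph $S_{4,4}$ is obtained from the star $K_{1,3}$ and the path $P_4$ on 4 vertices by adding an edge between an end vertex of $P_4$ and the central vertex of $K_{1,3}$. *)

(* Defs.v *)
From mathcomp Require Import all_boot all_order.
Set Implicit Arguments. Unset Strict Implicit. Unset Printing Implicit Defensive.

Definition simple_graph (T : finType) (e : rel T) : Prop :=
  symmetric e /\ irreflexive e.

Definition connected_graph (T : finType) (e : rel T) : Prop :=
  0 < #|T| /\ forall x y : T, connect e x y.

Definition nverts (T : finType) := #|T|.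

Definition deg (T : finType) (e : rel T) (x : T) : nat := #|[set y | e x y]|.

Definition contains_subgraph (F : finType) (f : rel F) (T : finType) (e : rel T) : Prop :=
  exists phi : F -> T, injective phi /\ forall x y, f x y -> e (phi x) (phi y).

Definition rel_of_edges (n : nat) (E : seq (nat * nat)) : rel 'I_n :=
  fun i j => ((val i, val j) \in E) || ((val j, val i) \in E).

Definition K14 : rel 'I_5 := @rel_of_edges 5 [:: (0,1); (0,2); (0,3); (0,4)].

(* sparkler S_{4,4}: star K_{1,3} with center 0 and leaves 1,2,3; path P_4 = 4-5-6-7;
   extra edge between the end vertex 4 of the path and the center 0. *)
Definition S44 : rel 'I_8 :=
  @rel_of_edges 8 [:: (0,1); (0,2); (0,3); (4,5); (5,6); (6,7); (0,4)].

(* Main.v *)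
Require Import Defs.
From mathcomp Require Import all_boot all_order.
From mathcomp Require Import zify.

Section G.
Variables (T : finType) (e : rel T).
Hypothesis esym : symmetric e.
Hypothesis eirr : irreflexive e.

Definition Nb {T0 : finType} (e0 : rel T0) (S : {set T0}) : {set T0} := \bigcup_(x in S) (x |: [set y | e0 x y]).

Lemma Nb_card (S : {set T}) D : (forall x, deg e x <= D) -> #|Nb e S| <= #|S| * D.+1.
Proof.
move=> HD; rewrite /Nb -sum_nat_const.
elim/big_rec2: _ => [|i A n _ HA]; first by rewrite cards0.
rewrite cardsU.
apply: leq_trans (leq_subr _ _) _; apply: leq_add => //.
by rewrite cardsU1; have := HD i; rewrite /deg; case: (_ \notin _) => /= H; lia.
Qed.

Lemma NbE (S : {set T}) y : (y \in Nb e S) = [exists x in S, (y == x) || e x y].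
Proof.
apply/bigcupP/existsP => [[x xS]|[x /andP[xS H]]].
  by rewrite !inE => H; exists x; rewrite xS.
by exists x => //; rewrite !inE.
Qed.

Lemma Nb_sub (S : {set T}) : S \subset Nb e S.
Proof. by apply/subsetP => x xS; rewrite NbE; apply/existsP; exists x; rewrite xS eqxx. Qed.

Lemma Nb_edge (S : {set T}) x y : x \in S -> e x y -> y \in Nb e S.
Proof. by move=> xS exy; rewrite NbE; apply/existsP; exists x; rewrite xS exy orbT. Qed.

Lemma Nb_new (S : {set T}) y : y \in Nb e S -> y \notin S -> exists2 x, x \in S & e x y.
Proof.
rewrite NbE => /existsP[x /andP[xS /orP[/eqP ->|H]]] yS.
  by rewrite xS in yS.
by exists x.
Qed.

Lemma closed_connect (S : {set T}) x y :
  (forall z w, z \in S -> e z w -> w \in S) -> x \in S -> connect e x y -> y \in S.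
Proof.
move=> Hc xS /connectP[p Hp ->]; elim: p x xS Hp => [|z p IH] x xS //=.
case/andP=> exz Hp; exact: IH (Hc _ _ xS exz) Hp.
Qed.

Lemma embed (v a b c p1 p2 p3 p4 : T) :
  uniq [:: v; a; b; c; p1; p2; p3; p4] ->
  e v a -> e v b -> e v c -> e v p1 -> e p1 p2 -> e p2 p3 -> e p3 p4 ->
  contains_subgraph S44 e.
Proof.
move=> U h1 h2 h3 h4 h5 h6 h7.
exists (fun i : 'I_8 => nth v [:: v; a; b; c; p1; p2; p3; p4] i); split.
  move=> i j /eqP; rewrite nth_uniq // => /eqP; exact: val_inj.
move=> [x Hx] [y Hy].
do 8?[case: x Hx => [|x] Hx //]; do 8?[case: y Hy => [|y] Hy //];
rewrite /S44 /rel_of_edges /= => _; by [|rewrite esym].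
Qed.

End G.
Arguments Nb_card {T e} S D _.
Arguments NbE {T e}.
Arguments Nb_sub {T e}.
Arguments Nb_edge {T e S x y}.
Arguments Nb_new {T e S y}.
Arguments closed_connect {T e S x y}.

(* deg x > (v(H)/2)^(1/7)  <->  deg x ^ 7 > v(H)/2  <->  2 * deg x ^ 7 > v(H) *)
Theorem lemma3 (T : finType) (e : rel T) :
  simple_graph e -> connected_graph e ->
  contains_subgraph K14 e -> ~ contains_subgraph S44 e ->
  exists x : T, nverts T < 2 * deg e x ^ 7.
Proof.
move=> [esym eirr] [_ conn] [psi [psiI psiE]] NS.
set v := psi ord0.
have E i : i != ord0 -> e v (psi i).
  rewrite /v; case: i => [[|[|[|[|[|i]]]]] Hi] // _; apply: psiE => //.
have dv : 4 <= deg e v.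
  have -> : 4 = #|[set psi i | i in [set~ (ord0 : 'I_5)]]|.
    by rewrite card_imset // cardsC1 card_ord.
  apply: subset_leq_card; apply/subsetP => y /imsetP[i Hi ->].
  by rewrite inE; apply: E; rewrite !inE in Hi.
case: (@arg_maxnP _ v predT (deg e) erefl) => m _ Hm.
set D := deg e m.
have HD x : deg e x <= D by exact: Hm.
have D4 : 4 <= D by apply: leq_trans dv (HD v).
set B0 := [set v]; set B1 := Nb e B0; set B2 := Nb e B1; set B3 := Nb e B2.
have three p1 : exists a b c, [&& a != b, a != c, b != c, a != p1, b != p1 & c != p1]
    /\ [/\ e v a, e v b & e v c].
  have I i j : i != j -> psi i != psi j by apply: contra => /eqP/psiI ->.
  pose i1 := (@Ordinal 5 1 erefl); pose i2 := (@Ordinal 5 2 erefl).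
  pose i3 := (@Ordinal 5 3 erefl); pose i4 := (@Ordinal 5 4 erefl).
  have e1 := E i1 erefl; have e2 := E i2 erefl; have e3 := E i3 erefl; have e4 := E i4 erefl.
  have d12 := I i1 i2 erefl; have d13 := I i1 i3 erefl; have d14 := I i1 i4 erefl.
  have d23 := I i2 i3 erefl; have d24 := I i2 i4 erefl; have d34 := I i3 i4 erefl.
  have d21 := I i2 i1 erefl; have d31 := I i3 i1 erefl; have d41 := I i4 i1 erefl.
  have d32 := I i3 i2 erefl; have d42 := I i4 i2 erefl; have d43 := I i4 i3 erefl.
  case: (eqVneq (psi i1) p1) => [<-|n1].
    by exists (psi i2), (psi i3), (psi i4); rewrite ?d12 ?d13 ?d14 ?d23 ?d24 ?d34 ?d21 ?d31 ?d41 ?d32 ?d42 ?d43.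
  case: (eqVneq (psi i2) p1) => [<-|n2].
    by exists (psi i1), (psi i3), (psi i4); rewrite ?d12 ?d13 ?d14 ?d23 ?d24 ?d34 ?d21 ?d31 ?d41 ?d32 ?d42 ?d43.
  case: (eqVneq (psi i3) p1) => [<-|n3].
    by exists (psi i1), (psi i2), (psi i4); rewrite ?d12 ?d13 ?d14 ?d23 ?d24 ?d34 ?d21 ?d31 ?d41 ?d32 ?d42 ?d43.
  by exists (psi i1), (psi i2), (psi i3); rewrite d12 d13 d23 n1 n2 n3.
have closed z w : z \in B3 -> e z w -> w \in B3.
  move=> zB ezw; apply/negPn/negP => wB.
  have zB2 : z \notin B2 by apply: contra wB => zB2; exact: Nb_edge ezw.
  have [p2 p2B ep2] := Nb_new zB zB2.
  have p2B1 : p2 \notin B1 by apply: contra zB2 => H; exact: Nb_edge ep2.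
  have [p1 p1B ep1] := Nb_new p2B p2B1.
  have p1B0 : p1 \notin B0 by apply: contra p2B1 => H; exact: Nb_edge ep1.
  have [v' v'B ev] := Nb_new p1B p1B0.
  move: v'B ev; rewrite inE => /eqP -> ev.
  have sub01 := subsetP (Nb_sub B0); have sub12 := subsetP (Nb_sub B1).
  have sub23 := subsetP (Nb_sub B2).
  have nadj x : x \notin B1 -> (x != v) && ~~ e v x.
    move=> H; apply/andP; split.
      by apply: contraNneq H => ->; apply: sub01; rewrite inE.
    by apply: contra H => H; apply: Nb_edge H; rewrite inE.
  have zB1 : z \notin B1 by apply: contra zB2; apply: sub12.
  have wB1 : w \notin B1 by apply: contra wB => H; apply: sub23; apply: sub12.
  have wB2 : w \notin B2 by apply: contra wB; apply: sub23.
  case/andP: (nadj _ p2B1) => n2 a2; case/andP: (nadj _ zB1) => n3 a3.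
  case/andP: (nadj _ wB1) => n4 a4.
  have [a [b [c [/and3P[dab dac /and4P[dbc da db dc]] [ea eb ec]]]]] := three p1.
  apply: NS; apply: (@embed T e esym v a b c p1 p2 z w) => //.
  have ne x y : e v x -> y \notin B1 -> x != y.
    by move=> exy H; apply: contraNneq H => <-; apply: Nb_edge exy; rewrite inE.
  have ne2 x y : x \in B1 -> y \notin B1 -> x != y by move=> H1 H2; apply: contraNneq H2 => <-.
  have ne3 x y : x \in B2 -> y \notin B2 -> x != y by move=> H1 H2; apply: contraNneq H2 => <-.
  rewrite /= !inE !negb_or.
  have vn x : e v x -> v != x by move=> H; apply: contraTneq H => <-; rewrite eirr.
  rewrite (vn a) // (vn b) // (vn c) // (vn p1) // eq_sym n2 eq_sym n3 eq_sym n4.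
  rewrite dab dac dbc da db dc.
  have nz : z \notin B1 := zB1.
  rewrite (ne a p2) // (ne b p2) // (ne c p2) // (ne p1 p2) //.
  rewrite (ne a z) // (ne b z) // (ne c z) // (ne p1 z) //.
  rewrite (ne a w) // (ne b w) // (ne c w) // (ne p1 w) //.
  rewrite (ne3 p2 z) ?(ne3 p2 w) //.
  by rewrite /= !andbT; apply: contraNneq wB => <-.
have all3 y : y \in B3.
  apply: (closed_connect closed _ (conn v y)).
  by apply: (subsetP (Nb_sub B2)); apply: (subsetP (Nb_sub B1));
     apply: (subsetP (Nb_sub B0)); rewrite inE.
exists m; rewrite /nverts.
have cT : #|T| <= D.+1 ^ 3.
  have -> : #|T| = #|B3| by apply/eqP; rewrite eqn_leq subset_leq_card ?max_card //;
     apply/subsetP => y _; apply: all3.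
  apply: leq_trans (Nb_card B2 _ HD) _; rewrite (mulnC _ D.+1) expnS leq_mul2l.
  apply/orP; right; apply: leq_trans (Nb_card B1 _ HD) _; rewrite (mulnC _ D.+1) expnS leq_mul2l.
  apply/orP; right; apply: leq_trans (Nb_card B0 _ HD) _; by rewrite cards1 mul1n expn1.
apply: leq_ltn_trans cT _; rewrite -/D.
have h1 : D.+1 ^ 3 <= (2 * D) ^ 3 by rewrite leq_exp2r //; lia.
apply: leq_ltn_trans h1 _.
rewrite expnMn (_ : 7 = 3 + 4) // expnD.
have h2 : 2 ^ 3 < 2 * D ^ 4.
  have : 4 ^ 4 <= D ^ 4 by rewrite leq_exp2r.
  lia.
have h3 : 0 < D ^ 3 by rewrite expn_gt0; lia.
move: h2 h3; set X := D ^ 3; set Y := D ^ 4; nia.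
Qed.
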